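(* For every $M\geq 1$, $$g_1(M)=\sum_{k\geq 0}(k+1)\binom{M-k-1}{k+1},$$ where binomial coefficients $\binom{a}{b}$ with $b>a$ are zero.
   Context: The perimeter of a nonempty partition $\lambda$ with largest part $\lambda_1$ and $\ell(\lambda)$ parts is $\lambda_1+\ell(\lambda)-1$. $g_1(M)$ is the number of partitions with perimeter $M$ in which exactly one distinct even integer occurs as a part (possibly with multiplicity greater than one) and all other parts are odd. *)

(* Defs.v *)
From mathcomp Require Import all_boot.
Set Implicit Arguments. Unset Strict Implicit. Unset Printing Implicit Defensive.

Definition is_partition (l : seq nat) : bool :=
  all (fun x => 0 < x) l && sorted geq l.

Definition perimeter (l : seq nat) : nat := head 0 l + size l - 1.

Definition one_even_part (l : seq nat) : bool :=
  size (undup (filter (fun x => ~~ odd x) l)) == 1.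

Definition g1_pred (M : nat) (l : seq nat) : bool :=
  [&& is_partition l, l != [::], perimeter l == M & one_even_part l].

Definition counts (P : seq nat -> bool) (c : nat) : Prop :=
  exists L : seq (seq nat), [/\ uniq L, (forall l, (l \in L) = P l) & size L = c].

(* Main.v *)
Require Import Defs.
From mathcomp Require Import all_boot zify.

Fixpoint parts (n m : nat) : seq (seq nat) :=
  match n with
  | 0 => [:: [::]]
  | n'.+1 => [seq x :: s | x <- iota 1 m, s <- parts n' x]
  end.

Lemma geq_trans : transitive geq.
Proof. move=> a b c /= h1 h2; lia. Qed.

Lemma mem_parts n m s :
  (s \in parts n m) = [&& size s == n, all (fun x => 0 < x <= m) s & sorted geq s].
Proof.
elim: n m s => [|n IH] m s /=.
  by case: s.
apply/allpairsPdep/idP.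
  move=> [x [t [hx ht ->]]]; move: hx ht; rewrite IH mem_iota /= => hx /and3P[/eqP-> ha hs].
  rewrite eqxx /= (path_sortedE geq_trans) hs andbT.
  move: hx => /andP[h1 h2].
  have -> : 0 < x <= m by lia.
  rewrite /=; apply/andP; split.
    by apply/allP=> y /(allP ha) /= ; lia.
  by apply/allP=> y /(allP ha) /= ; lia.
case: s => [|x t] //= /and3P[/eqP[]ht /andP[hx ha] hp].
move: hp; rewrite (path_sortedE geq_trans) => /andP[hb hs].
exists x, t; split => //.
  rewrite mem_iota; lia.
rewrite IH ht eqxx hs andbT /=.
apply/allP=> y hy; have := allP hb y hy; have := allP ha y hy => /=; lia.
Qed.

Lemma uniq_parts n m : uniq (parts n m).
Proof.
elim: n m => [|n IH] m //=.
apply: allpairs_uniq_dep; first exact: iota_uniq.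
  by move=> x _; apply: IH.
by move=> [a s] [b t] _ _ /= [-> ->].
Qed.

Lemma count_add (T : Type) (a b c : pred T) s :
  (forall x, a x = b x + c x :> nat) -> count a s = count b s + count c s.
Proof.
move=> h; elim: s => //= x s ->; rewrite h; lia.
Qed.

Definition cV (V : pred nat) m := count V (iota 1 m).

Lemma cVS V m : cV V m.+1 = cV V m + V m.+1.
Proof. by rewrite /cV -(addn1 m) iotaD count_cat /= addn0 add1n addn1. Qed.

Lemma count_all_parts (V : pred nat) n m :
  count (all V) (parts n m) = 'C(n + cV V m - 1, n).
Proof.
elim: n m => [|n IH] m /=.
  by rewrite bin0.
rewrite count_flatten -map_comp.
have -> : [seq (count (all V) \o (fun x => [seq x :: s | s <- parts n x])) i | i <- iota 1 m]
   = [seq V i * 'C(n + cV V i - 1, n) | i <- iota 1 m].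
  apply: eq_map => x /=; rewrite count_map -IH.
  case hx: (V x); first by rewrite mul1n; apply: eq_count => s /=; rewrite hx.
  rewrite mul0n (@eq_count _ _ pred0) ?count_pred0 // => s /=; by rewrite hx.
elim: m => [|m IHm].
  by rewrite /cV /= addn0 subn1 /= bin_small.
rewrite -(addn1 m) iotaD map_cat sumn_cat IHm /= addn0 add1n addn1 cVS.
case: (V m.+1) => /=.
  rewrite mul1n.
  have -> : n.+1 + (cV V m + 1) - 1 = (n + cV V m).+1 by lia.
  rewrite binS.
  have -> : n.+1 + cV V m - 1 = n + cV V m by lia.
  by have -> : n + (cV V m + 1) - 1 = n + cV V m by lia.
by rewrite addn0 mul0n addn0.
Qed.

Definition Qe (e : nat) (l : seq nat) := (e \in l) && all (fun x => odd x || (x == e)) l.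

Lemma one_evenP l : one_even_part l = has (fun e => ~~ odd e && Qe e l) l.
Proof.
rewrite /one_even_part /Qe.
set f := filter _ l.
apply/idP/hasP.
  case eq: (undup f) => [|e [|]] // _.
  have : e \in undup f by rewrite eq inE.
  rewrite mem_undup mem_filter => /andP[he hl].
  exists e => //; rewrite he hl /=.
  apply/allP => x hx; case hox: (odd x) => //=.
  have : x \in undup f by rewrite mem_undup mem_filter hox.
  by rewrite eq inE.
move=> [e hel /andP[he /andP[_ ha]]].
have hs : {subset undup f <= [:: e]}.
  move=> x; rewrite mem_undup mem_filter inE => /andP[hx hxl].
  by move: (allP ha x hxl); rewrite (negbTE hx).
have := uniq_leq_size (undup_uniq f) hs.
have : e \in undup f by rewrite mem_undup mem_filter he.
by case: (undup f) => [|y [|]].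
Qed.

Lemma count_big (T : Type) (P : pred T) s : count P s = \sum_(x <- s) (P x : nat).
Proof. by elim: s => [|x s IH]; rewrite ?big_nil ?big_cons //= IH. Qed.

Definition Ev a := filter (fun x => ~~ odd x) (iota 1 a).

Lemma has_sum a s : all (fun x => 0 < x <= a) s ->
  (has (fun e => ~~ odd e && Qe e s) s : nat) = \sum_(e <- Ev a) (Qe e s : nat).
Proof.
move=> hb; rewrite -count_big.
case: hasP => [[e0 he0 /andP[ho0 hq0]]|hn].
  rewrite (@eq_in_count _ _ (pred1 e0)).
    rewrite count_uniq_mem; last by rewrite filter_uniq // iota_uniq.
    have h := allP hb e0 he0; rewrite /= in h.
    by rewrite mem_filter ho0 mem_iota /=; have -> : 1 <= e0 < 1 + a by lia.
  move=> e; rewrite mem_filter => /andP[ho _] /=.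
  apply/idP/eqP => [/andP[he /allP ha]|->] //.
  have /andP[_ /allP ha0] := hq0.
  by have := ha0 e he; rewrite (negbTE ho) => /eqP.
apply/esym/eqP; rewrite -leqn0 leqNgt -has_count; apply/hasP => [[e]].
rewrite mem_filter => /andP[ho _] hq; apply: hn; exists e => //.
  by case/andP: hq.
by rewrite ho.
Qed.

Lemma Qe_split e s : ~~ odd e ->
  (all (fun x => odd x || (x == e)) s : nat) = Qe e s + all odd s.
Proof.
move=> ho; rewrite /Qe; case he: (e \in s) => /=.
  have -> : all odd s = false by apply/negbTE/negP => /allP /(_ e he); rewrite (negbTE ho).
  by rewrite addn0.
congr nat_of_bool; apply: eq_in_all => x hx /=.
case: eqP => [exe|]; last by rewrite orbF.
by rewrite exe he in hx.
Qed.

Lemma count_odd_a a X : odd a -> (forall s, s \in X -> all (fun x => 0 < x <= a) s) ->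
  count (fun s => one_even_part (a :: s)) X =
  \sum_(e <- Ev a) (count (all (fun x => odd x || (x == e))) X - count (all odd) X).
Proof.
move=> hoa hX.
rewrite (@eq_count _ _ (fun s => has (fun e => ~~ odd e && Qe e s) s)); last first.
  move=> s /=; rewrite one_evenP /= hoa /=; apply: eq_has => e /=.
  case he: (odd e) => //=; rewrite /Qe /= hoa /= inE.
  by have -> : (e == a) = false by apply/negbTE; apply/eqP => ea; rewrite ea hoa in he.
rewrite count_big.
rewrite (eq_big_seq (fun s => \sum_(e <- Ev a) (Qe e s : nat))); last first.
  by move=> s hs; rewrite (@has_sum a) //; apply: hX.
rewrite exchange_big /=; apply: eq_big_seq => e.
rewrite mem_filter => /andP[ho _].
rewrite (@count_add _ _ (Qe e) (all odd)); first by rewrite addnK count_big.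
by move=> s; apply: Qe_split.
Qed.

Lemma count_even_a a X : ~~ odd a ->
  count (fun s => one_even_part (a :: s)) X = count (all (fun x => odd x || (x == a))) X.
Proof.
move=> hoa; apply: eq_count => s /=; rewrite one_evenP /= /Qe /= inE eqxx /= (negbTE hoa) /=.
apply/orP/idP; last by move=> h; left.
case=> // /hasP[e _ /and4P[_ _ /eqP ea hs]].
by rewrite ea.
Qed.

Lemma cV_odd j : cV odd (2 * j) = j /\ cV odd (2 * j + 1) = j + 1.
Proof.
elim: j => [|j [IH1 IH2]]; first by [].
have e1 : 2 * j.+1 = (2 * j + 1).+1 by lia.
have e2 : 2 * j.+1 + 1 = (2 * j.+1).+1 by lia.
have h1 : cV odd (2 * j.+1) = j.+1.
  rewrite e1 cVS IH2 /=.
  have -> : odd (2 * j + 1) = true by rewrite oddD oddM.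
  by rewrite /= addn0 addn1.
split => //; rewrite e2 cVS h1 oddS oddM /=; lia.
Qed.

Lemma cV_oe e m : ~~ odd e -> 0 < e ->
  cV (fun x => odd x || (x == e)) m = cV odd m + (e <= m).
Proof.
move=> ho he; elim: m => [|m IH].
  by rewrite /cV /=; case: e ho he.
rewrite !cVS IH.
case: (eqVneq m.+1 e) => [em|ne].
  subst e; by rewrite (negbTE ho) orbT ltnn ltnSn.
rewrite orbF.
have -> : (e <= m.+1) = (e <= m) by rewrite leq_eqVlt eq_sym (negbTE ne) /= ltnS.
by rewrite addnAC.
Qed.

Lemma size_Ev a : size (Ev a) = a - cV odd a.
Proof.
rewrite size_filter /cV.
have := count_predC odd (iota 1 a); rewrite size_iota => e.
rewrite -{2}e addKn; exact: eq_count.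
Qed.

Lemma sum_const_seq (T : Type) (E : seq T) c : \sum_(e <- E) c = size E * c.
Proof. by elim: E => [|x E IH]; rewrite ?big_nil ?big_cons //= IH mulSn. Qed.

Definition h M a := if odd a then a./2 * 'C(M - a./2 - 1, a./2 + 1) else 'C(M - a./2, a./2).

Lemma per_a M a : 1 <= a <= M ->
  count (fun s => one_even_part (a :: s)) (parts (M - a) a) = h M a.
Proof.
move=> ha.
have hd := odd_double_half a; rewrite -muln2 in hd.
rewrite /h; case hoa: (odd a).
  set j := a./2 in hd *.
  have aj : a = 2 * j + 1 by lia.
  rewrite count_odd_a //; last by move=> s; rewrite mem_parts => /and3P[].
  rewrite (eq_big_seq (fun _ => 'C(M - a + (j + 2) - 1, M - a) - 'C(M - a + (j + 1) - 1, M - a))); last first.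
    move=> e; rewrite mem_filter mem_iota => /andP[ho hr].
    rewrite !count_all_parts cV_oe //; last by lia.
    rewrite aj (proj2 (cV_odd j)).
    have -> : (e <= 2 * j + 1) = true by apply/idP; lia.
    by rewrite -addnA.
  rewrite sum_const_seq size_Ev aj (proj2 (cV_odd j)).
  have -> : 2 * j + 1 - (j + 1) = j by lia.
  congr (_ * _).
  case hn: (M - (2 * j + 1)) => [|n'].
    rewrite !bin0 subnn bin_small //; lia.
  have -> : n'.+1 + (j + 2) - 1 = (n' + j + 1).+1 by lia.
  rewrite binS.
  have -> : n'.+1 + (j + 1) - 1 = n' + j + 1 by lia.
  rewrite addKn.
  have -> : M - j - 1 = n' + j + 1 by lia.
  have e : n' + j + 1 - (j + 1) = n' by lia.
  by rewrite -[RHS]bin_sub ?e //; lia.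
set i := a./2 in hd *.
have ai : a = 2 * i by lia.
rewrite count_even_a ?hoa // count_all_parts cV_oe ?hoa //; last by lia.
rewrite leqnn {2}ai (proj1 (cV_odd i)).
have -> : M - a + (i + true) - 1 = M - i by rewrite ai /=; lia.
have -> : M - a = (M - i) - i by lia.
by rewrite bin_sub //; lia.
Qed.

Lemma h_odd M k : h M (2 * k + 1) = k * 'C(M - k - 1, k + 1).
Proof.
have e : 2 * k + 1 = true + k.*2 by rewrite -muln2; lia.
by rewrite /h e half_bit_double oddD odd_double.
Qed.

Lemma h_even M k : h M (2 * k + 2) = 'C(M - k - 1, k + 1).
Proof.
have e : 2 * k + 2 = false + (k + 1).*2 by rewrite -muln2; lia.
rewrite /h e half_bit_double oddD odd_double /=.
by have -> : M - (k + 1) = M - k - 1 by lia.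
Qed.

Lemma h_big M a : M < a -> h M a = 0.
Proof.
move=> hl; have hd := odd_double_half a; rewrite -muln2 in hd.
rewrite /h; case: (odd a) hd => /= hd; rewrite bin_small ?muln0 //; lia.
Qed.

Lemma pair_sum M N : \sum_(1 <= a < (2 * N).+1) h M a =
  \sum_(0 <= k < N) (h M (2 * k + 1) + h M (2 * k + 2)).
Proof.
elim: N => [|N IH]; first by rewrite !big_geq.
have e : (2 * N.+1).+1 = (2 * N + 1).+2 by lia.
rewrite e big_nat_recr /=; last by lia.
rewrite big_nat_recr /=; last by lia.
rewrite big_nat_recr /= //.
have e3 : (2 * N + 1) = (2 * N).+1 by lia.
rewrite e3 IH -e3 -addnA; congr (_ + (_ + _)); congr (h M); lia.
Qed.

Lemma final_sum M : \sum_(1 <= a < M.+1) h M a =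
  \sum_(0 <= k < M) (k + 1) * 'C(M - k - 1, k + 1).
Proof.
have H : \sum_(1 <= a < (2 * M).+1) h M a = \sum_(1 <= a < M.+1) h M a.
  rewrite (@big_cat_nat _ _ _ M.+1 1 (2 * M).+1) //=; last by lia.
  rewrite [X in _ + X]big1_seq ?addn0 //.
  move=> a /andP[_]; rewrite mem_index_iota => /andP[h1 _]; apply: h_big; lia.
rewrite -H pair_sum; apply: eq_bigr => k _.
by rewrite h_odd h_even addn1 mulSn addnC.
Qed.

Definition cands M := [seq a :: s | a <- iota 1 M, s <- parts (M - a) a].

Lemma g1_cons M a s : 1 <= a <= M -> s \in parts (M - a) a ->
  g1_pred M (a :: s) = one_even_part (a :: s).
Proof.
move=> ha; rewrite mem_parts => /and3P[/eqP hs hb hso].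
rewrite /g1_pred /is_partition /perimeter /= hs.
have -> : a + (M - a).+1 - 1 = M by lia.
rewrite eqxx (path_sortedE geq_trans) hso.
have -> : 0 < a by lia.
have -> : all [eta leq 1] s by apply/allP => x /(allP hb) /andP[].
by have -> : all (geq a) s by apply/allP => x /(allP hb) /andP[].
Qed.

Theorem mainTheorem10 (M : nat) : 1 <= M ->
  counts (g1_pred M) (\sum_(0 <= k < M) (k + 1) * 'C(M - k - 1, k + 1)).
Proof.
move=> hM.
exists (filter (g1_pred M) (cands M)); split.
- rewrite filter_uniq //; apply: allpairs_uniq_dep; first exact: iota_uniq.
    by move=> x _; apply: uniq_parts.
  by move=> [a s] [b t] _ _ /= [-> ->].
- move=> l; rewrite mem_filter; case hg: (g1_pred M l) => //=.
  move: hg; rewrite /g1_pred /is_partition /perimeter.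
  case: l => [|a s] //= /and3P[hpart /eqP hper _].
  move: hpart => /andP[/andP[ha hp] hso].
  move: hso; rewrite (path_sortedE geq_trans) => /andP[hg hso].
  apply/allpairsPdep; exists a, s; split => //.
    rewrite mem_iota; lia.
  rewrite mem_parts hso andbT; apply/andP; split; first by rewrite -hper addnS subn1 /= addKn.
  apply/allP => x hx; have := allP hp x hx; have := allP hg x hx => /=; lia.
- rewrite size_filter count_flatten -map_comp -final_sum.
  rewrite big_mkcond /= /index_iota subn1 /=.
  rewrite sumnE big_map; apply: eq_big_seq => a; rewrite mem_iota => ha /=.
  rewrite count_map -per_a; last by lia.
  apply: eq_in_count => s hs /=; apply: g1_cons => //; lia.
Qed.
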